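(* For every $n>0$, there are finite alphabets $\Sigma_I,\Sigma_O$ and a language $L_n'\subseteq(\Sigma_I\times\Sigma_O)^\omega$ recognized by a finitary Büchi automaton with costs $\mathcal{A}_n'$ with $O(n)$ states such that: Player $O$ wins $\Gamma_f(L_n')$ for every delay function $f$; an optimal winning strategy for Player $O$ in $\Gamma_{f_{2^n}}(L_n')$ has cost $0$; and for every $k<2^n$, an optimal winning strategy for Player $O$ in $\Gamma_{f_k}(L_n')$ has cost $n$.
   Context: A parity automaton with costs is a tuple $\mathcal{A}=(Q,\Sigma,q_I,\delta,\Omega,\mathrm{Cst})$ with a finite set $Q$ of states, a finite alphabet $\Sigma$, an initial state $q_I$, a deterministic complete transition function $\delta\colon Q\times\Sigma\to Q$, a coloring $\Omega\colon Q\to\mathbb{N}$, and a cost function $\mathrm{Cst}$ assigning to every transition $(q,a,\delta(q,a))$ either $\epsilon$ or $\mathtt{i}$ (increment-transition). A finitary Büchi automaton is one in which every transition is an increment-transition and $\Omega(Q)=\{1,2\}$. The run on $a_0a_1\cdots$ is $(q_0,a_0,q_1)(q_1,a_1,q_2)\cdots$ with $q_0=q_I$, $q_{j+1}=\delta(q_j,a_j)$; the cost of a finite run is its number of increment-transitions. For odd $c$, $\mathrm{Ans}(c)=\{c'\in\Omega(Q)\mid c'>c,\ c'\text{ even}\}$. For an infinite run $\rho$ and $n$, $\mathrm{Cor}(\rho,n)=0$ if $\Omega(q_n)$ is even, and otherwise it is the minimal cost of $(q_n,a_n,q_{n+1})\cdots(q_{n'-1},a_{n'-1},q_{n'})$ over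 $n'>n$ with $\Omega(q_{n'})\in\mathrm{Ans}(\Omega(q_n))$ ($\min\emptyset=\infty$). The run is accepting if $\limsup_n\mathrm{Cor}(\rho,n)<\infty$; $L(\mathcal{A})$ is the set of infinite words whose run is accepting. A delay function is a map $f\colon\mathbb{N}\to\mathbb{N}\setminus\{0\}$; for $k\ge0$, $f_k$ denotes the delay function with $f_k(0)=k+1$ and $f_k(i)=1$ for $i>0$. For $L\subseteq(\Sigma_I\times\Sigma_O)^\omega$, the delay game $\Gamma_f(L)$ is played in rounds $i=0,1,2,\ldots$: in round $i$, Player $I$ picks $u_i\in\Sigma_I^{f(i)}$, then Player $O$ picks $v_i\in\Sigma_O$. Player $O$ wins the play if the outcome, i.e., the word over $\Sigma_I\times\Sigma_O$ pairing $u_0u_1u_2\cdots$ and $v_0v_1v_2\cdots$ letterwise, is in $L$. A strategy for Player $O$ is a map $\tau_O\colon\Sigma_I^*\to\Sigma_O$; a play is consistent with $\tau_O$ if $v_i=\tau_O(u_0\cdots u_i)$ for all $i$; $\tau_O$ is winning if every consistent play is won by Player $O$, and Player $O$ wins the game if she has a winning strategy. For a winning strategy $\tau_O$ in $\Gamma_f(L(\mathcal{A}))$, its cost is $\mathrm{Cst}_\mathcal{A}(\tau_O)=\sup_w\limsup_{n\to\infty}\mathrm{Cor}(\rho(w),n)$, where $w$ ranges over outcomes of plays consistent with $\tau_O$ and $\rho(w)$ is the run of $\mathcal{A}$ on $w$; a winning strategy is optimal if its cost is minimal among all winning strategies of Player $O$ in $\Gamma_f(L(\mathcal{A}))$. 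*)

(* Defs.v *)
From mathcomp Require Import all_boot.
Set Implicit Arguments. Unset Strict Implicit. Unset Printing Implicit Defensive.

(* Parity automaton with costs over alphabet S (deterministic, complete).
   [incr q a = true] iff the transition (q,a,delta q a) is an increment-transition
   (cost i), [false] iff its cost is epsilon. *)
Record PAC (S : finType) := MkPAC {
  st : finType;
  qI : st;
  delta : st -> S -> st;
  col : st -> nat;
  incr : st -> S -> bool }.
Arguments qI {S} A : rename.
Arguments delta {S} A _ _ : rename.
Arguments col {S} A _ : rename.
Arguments incr {S} A _ _ : rename.

Definition finitary_buchi (S : finType) (A : PAC S) : Prop :=
  (forall q a, incr A q a) /\
  (forall q, col A q = 1 \/ col A q = 2) /\
  (exists q, col A q = 1) /\ (exists q, col A q = 2).

Fixpoint run_st (S : finType) (A : PAC S) (w : nat -> S) (n : nat) : st A :=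
  match n with
  | 0 => qI A
  | m.+1 => delta A (run_st A w m) (w m)
  end.

Definition seg_cost (S : finType) (A : PAC S) (w : nat -> S) (n n' : nat) : nat :=
  count (fun j => incr A (run_st A w j) (w j)) (iota n (n' - n)).

Definition Ans (S : finType) (A : PAC S) (c c' : nat) : Prop :=
  (exists q, col A q = c') /\ c < c' /\ ~~ odd c'.

(* Cor(rho(w), n) <= b   (Cor is 0 at even colors, otherwise a min over a set,
   min of the empty set being infinity) *)
Definition Cor_le (S : finType) (A : PAC S) (w : nat -> S) (n b : nat) : Prop :=
  ~~ odd (col A (run_st A w n)) \/
  exists n', n < n' /\ Ans A (col A (run_st A w n)) (col A (run_st A w n'))
             /\ seg_cost A w n n' <= b.

Definition limsup_Cor_le (S : finType) (A : PAC S) (w : nat -> S) (b : nat) : Prop :=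
  exists N, forall n, N <= n -> Cor_le A w n b.

Definition accepts (S : finType) (A : PAC S) (w : nat -> S) : Prop :=
  exists b, limsup_Cor_le A w b.

Definition delay_fun (f : nat -> nat) : Prop := forall i, 0 < f i.
Definition fk (k : nat) : nat -> nat := fun i => if i == 0 then k.+1 else 1.

Definition blocks_prefix (SI : finType) (us : nat -> seq SI) (i : nat) : seq SI :=
  flatten [seq us l | l <- iota 0 i].

Definition moves_I (SI : finType) (f : nat -> nat) (us : nat -> seq SI) : Prop :=
  forall i, size (us i) = f i.

Definition is_outcome (SI SO : finType) (us : nat -> seq SI) (vs : nat -> SO)
    (w : nat -> (SI * SO)%type) : Prop :=
  forall j, Some (w j).1 = onth (blocks_prefix us j.+1) j /\ (w j).2 = vs j.

Definition stratO (SI SO : finType) := seq SI -> SO.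

Definition consistent_outcome (SI SO : finType) (f : nat -> nat)
    (tau : stratO SI SO) (w : nat -> (SI * SO)%type) : Prop :=
  exists us, moves_I f us /\
    is_outcome us (fun i => tau (blocks_prefix us i.+1)) w.

Definition winning (SI SO : finType) (A : PAC (SI * SO)%type)
    (f : nat -> nat) (tau : stratO SI SO) : Prop :=
  forall w, consistent_outcome f tau w -> accepts A w.

Definition O_wins (SI SO : finType) (A : PAC (SI * SO)%type)
    (f : nat -> nat) : Prop :=
  exists tau, winning A f tau.

Definition strat_cost_le (SI SO : finType) (A : PAC (SI * SO)%type)
    (f : nat -> nat) (tau : stratO SI SO) (c : nat) : Prop :=
  forall w, consistent_outcome f tau w -> limsup_Cor_le A w c.

(* an optimal winning strategy in Gamma_f(L(A)) has cost c, i.e. the minimum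
   of the costs of winning strategies exists and equals c *)
Definition optimal_cost (SI SO : finType) (A : PAC (SI * SO)%type)
    (f : nat -> nat) (c : nat) : Prop :=
  (exists tau, winning A f tau /\ strat_cost_le A f tau c) /\
  (forall tau, winning A f tau -> forall c', strat_cost_le A f tau c' -> c <= c').

(* Main.v *)
Require Import Defs.
From mathcomp Require Import all_boot.
From mathcomp Require Import zify.
Set Implicit Arguments. Unset Strict Implicit. Unset Printing Implicit Defensive.

Section Constr.
Variable m : nat.
Local Notation N := m.+1.
Definition K := 2 ^ N.

Lemma K_gt1 : 1 < K.
Proof. by rewrite /K expnS; have := expn_gt0 2 m; lia. Qed.
Lemma K_gt0 : 0 < K. Proof. by have := K_gt1; lia. Qed.
Lemma N_ltK : N < K. Proof. by rewrite /K ltn_expl. Qed.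

Definition SI := ('I_K * bool)%type.
Definition SO := (bool * 'I_N)%type.
Definition ST := (bool + 'I_N + (bool * 'I_N * bool))%type.

Definition sR : ST := inl (inl false).
Definition sG : ST := inl (inl true).
Definition sP (j : 'I_N) : ST := inl (inr j).
Definition sN b i e : ST := inr (b, i, e).

Definition bit (i c : nat) := odd (c %/ 2 ^ i).
Definition dec (c : nat) := if c == 0 then K.-1 else c.-1.
Definition cnt (d : nat) := if d == 0 then 0 else K - d.

Definition dl (q : ST) (x : SI * SO) : ST :=
  let c := nat_of_ord x.1.1 in let r := x.1.2 in let b' := x.2.1 in let i' := x.2.2 in
  match q with
  | inl (inl false) => if c == 0 then sN b' i' (bit i' (dec c)) else sR
  | inl (inl true) => sG
  | inl (inr j) => if j.+1 < N then sP (inord j.+1) else sR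
  | inr (b, i, e) => if bit i c != e then sG
      else if c == 0 then (if r != b then sP ord0 else sN b' i' (bit i' (dec c)))
      else sN b i' (bit i' (dec c))
  end.

Definition colf (q : ST) := match q with inl (inr _) => 1 | _ => 2 end.

Definition Aut : PAC (SI * SO)%type :=
  {| st := ST; qI := sR; delta := dl; col := colf; incr := fun _ _ => true |}.

Lemma run_stS w t : run_st Aut w t.+1 = dl (run_st Aut w t) (w t).
Proof. by []. Qed.

Lemma chain w t (j : 'I_N) d : run_st Aut w t = sP j -> j + d < N ->
  run_st Aut w (t + d) = sP (inord (j + d)).
Proof.
move=> H; elim: d => [|d IH] Hd.
  by rewrite !addn0 H inord_val.
rewrite addnS run_stS IH; last by lia.
rewrite /= inordK; last by lia.
by rewrite ifT ?addnS //; lia.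
Qed.

Lemma chain_end w t (j : 'I_N) : run_st Aut w t = sP j ->
  run_st Aut w (t + (N - j)) = sR.
Proof.
move=> H; have Hj := ltn_ord j.
have -> : t + (N - j) = (t + (m - j)).+1 by lia.
rewrite run_stS (chain H); last by lia.
rewrite /= inordK; last by lia.
by rewrite ifF //; lia.
Qed.

Lemma seg_costE w n n' : seg_cost Aut w n n' = n' - n.
Proof.
by rewrite /seg_cost (@eq_count _ _ predT) // count_predT size_iota.
Qed.

Lemma Cor_all w t : Cor_le Aut w t N.
Proof.
rewrite /Cor_le; case E: (run_st Aut w t) => [[g|j]|[[b i] e]]; try by left.
right; exists (t + (N - j)); rewrite chain_end // seg_costE; split; first by have := ltn_ord j; lia.
split; last by lia.
by split; [exists sR | ].
Qed.


Lemma bits_eq n a b : a < 2 ^ n -> b < 2 ^ n ->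
  (forall i, i < n -> bit i a = bit i b) -> a = b.
Proof.
elim: n a b => [|n IH] a b Ha Hb H; first by rewrite expn0 in Ha Hb; lia.
have H0 := H 0 (ltn0Sn n); rewrite /bit !expn0 !divn1 in H0.
have E : a %/ 2 = b %/ 2.
  apply: IH.
  - by rewrite ltn_divLR // -expnSr.
  - by rewrite ltn_divLR // -expnSr.
  by move=> i Hi; have := H i.+1 Hi; rewrite /bit expnS !divnMA.
by rewrite (divn_eq a 2) (divn_eq b 2) !modn2 E H0.
Qed.

Lemma dec_lt c : c < K -> dec c < K.
Proof. by rewrite /dec; have := K_gt0; case: ifP => _; lia. Qed.

Definition chal (c c' : nat) : 'I_N :=
  if [pick i : 'I_N | bit i (dec c) != bit i c'] is Some i then i else ord0.

Lemma chal_spec c c' : c < K -> c' < K ->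
  bit (chal c c') c' = bit (chal c c') (dec c) -> dec c = c'.
Proof.
move=> Hc Hc'; rewrite /chal; case: pickP => [i Hi | H].
  by move=> E; rewrite E eqxx in Hi.
move=> _; apply: (@bits_eq N) => //; first exact: dec_lt.
by move=> i Hi; have := H (Ordinal Hi); move/negbFE/eqP.
Qed.

Lemma dec_cnt d : d < K -> dec (cnt d) = if d.+1 == K then 0 else cnt d.+1.
Proof.
move=> Hd; have := K_gt1; rewrite /dec /cnt.
case: d Hd => [|d] Hd HK /=.
  by rewrite ifF; lia.
by case: ifP; case: ifP; lia.
Qed.

Lemma cnt_lt d : cnt d < K.
Proof. by rewrite /cnt; have := K_gt0; case: ifP; lia. Qed.

Lemma cnt_eq0 d : d < K -> (cnt d == 0) = (d == 0).
Proof. by rewrite /cnt; case: ifP => //; lia. Qed.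

Lemma bpS (T : finType) (us : nat -> seq T) i :
  blocks_prefix us i.+1 = blocks_prefix us i ++ us i.
Proof. by rewrite /blocks_prefix -addn1 iotaD map_cat flatten_cat /= cats0. Qed.

Lemma bp_prefix (T : finType) (us : nat -> seq T) i d :
  exists s, blocks_prefix us (i + d) = blocks_prefix us i ++ s.
Proof.
elim: d => [|d [s IH]]; first by exists [::]; rewrite addn0 cats0.
by exists (s ++ us (i + d)); rewrite addnS bpS IH catA.
Qed.

Lemma size_bp k (T : finType) (us : nat -> seq T) i : moves_I (fk k) us ->
  size (blocks_prefix us i.+1) = k.+1 + i.
Proof.
move=> Hm; elim: i => [|i IH].
  by rewrite bpS size_cat Hm /blocks_prefix /fk /= addn0.
by rewrite bpS size_cat IH Hm /fk /=; lia.
Qed.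

Lemma nth_bp k (T : finType) (x0 : T) (U : finType) us vs (w : nat -> T * U) i j :
  moves_I (fk k) us -> is_outcome us vs w ->
  j < size (blocks_prefix us i) -> nth x0 (blocks_prefix us i) j = (w j).1.
Proof.
move=> Hm Ho Hj.
have [s1 E1] := bp_prefix us i (j.+1).
have [s2 E2] := bp_prefix us j.+1 i.
have Hj1 : j < size (blocks_prefix us j.+1) by rewrite (size_bp j Hm); lia.
have := nth_cat x0 (blocks_prefix us i) s1 j; rewrite Hj -E1 addnC E2 nth_cat Hj1 => <-.
by apply: onth_nth; rewrite -(proj1 (Ho j)).
Qed.

Definition x0 : SI := (Ordinal K_gt0, false).
Definition tau_up (s : seq SI) : SO :=
  ((nth x0 s (size s).-1).2, chal (nth x0 s (size s - K - 1)).1 (nth x0 s (size s - K)).1).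

Lemma up_facts us w : moves_I (fk K) us ->
  is_outcome us (fun i => tau_up (blocks_prefix us i.+1)) w ->
  forall t, (w t).2.1 = (w (t + K)).1.2 /\ (w t).2.2 = chal (w t).1.1 (w t.+1).1.1.
Proof.
move=> Hm Ho t; have [_ E] := Ho t; rewrite E /tau_up (size_bp t Hm).
have -> : (K.+1 + t).-1 = t + K by lia.
have -> : K.+1 + t - K - 1 = t by lia.
have -> : K.+1 + t - K = t.+1 by lia.
have HK := K_gt0.
by rewrite !(nth_bp x0 Hm Ho) ?(size_bp t Hm) //; lia.
Qed.

Definition invP (w : nat -> (SI * SO)%type) t (q : ST) : Prop :=
  match q with
  | inl (inr _) => False
  | inr (b, i, e) => e = bit i (dec (w t).1.1) /\ i = (w t).2.2 /\
     exists d, [/\ d < K, d <= t, nat_of_ord (w t).1.1 = cnt d & b = (w (t - d + K)).1.2]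
  | _ => True end.

Lemma up_inv us w : moves_I (fk K) us ->
  is_outcome us (fun i => tau_up (blocks_prefix us i.+1)) w -> forall t,
  invP w t (run_st Aut w t.+1).
Proof.
move=> Hm Ho; have F := up_facts Hm Ho.
have Rcase : forall t, invP w t (dl sR (w t)).
  move=> t; rewrite /invP /=; case: ifP => // /eqP Hc; split => //; split => //.
  exists 0; split => //; first exact: K_gt0.
  by rewrite subn0 (proj1 (F t)).
elim=> [|t IH]; first exact: (Rcase 0).
rewrite run_stS; move: IH; case: (run_st Aut w t.+1) => [[[]|j]|[[b i] e]].
- by [].
- by move=> _; exact: Rcase.
- by [].
rewrite /invP; move=> [-> [-> [d [Hd Hdt Hc Hb]]]] /=.
case: ifP => // /negbFE/eqP Hbit.
have Hdec : dec (w t).1.1 = (w t.+1).1.1.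
  apply: chal_spec => //; rewrite -(proj2 (F t)); exact/esym.
rewrite Hc dec_cnt // in Hdec.
case: ifP => Hc0.
  have HdK : d.+1 = K.
    move: Hdec; case: ifP => [/eqP //|HK]; move/eqP: Hc0 => ->.
    by move/eqP; rewrite cnt_eq0 //; move/eqP: HK; lia.
  rewrite ifF; last first.
    rewrite Hb; have -> : t - d + K = t.+1 by lia.
    by rewrite eqxx.
  rewrite /sN; split => //; split => //; exists 0; split => //; first exact: K_gt0.
  - by move/eqP: Hc0.
  - by rewrite subn0 (proj1 (F t.+1)).
rewrite /sN; split => //; split => //; exists d.+1.
move: Hdec; case: ifP => [/eqP HdK|HdK] Hdec.
  by move: Hc0; rewrite -Hdec eqxx.
split; [by move/eqP: HdK; lia | lia | by [] | ].
by rewrite Hb subSS.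
Qed.

Lemma modS t : t.+1 %% K = if (t %% K).+1 == K then 0 else (t %% K).+1.
Proof.
rewrite -addn1 -modnDml addn1; have := ltn_pmod t K_gt0.
case: ifP => [/eqP -> _|/eqP H1 H2]; first exact: modnn.
by rewrite modn_small //; lia.
Qed.

Lemma modD s u : s %% K = 0 -> (s + u) %% K = u %% K.
Proof. by move=> Hs; rewrite -modnDml Hs add0n. Qed.

Lemma Rstay w t d : run_st Aut w t = sR ->
  (forall u, t <= u < t + d -> nat_of_ord (w u).1.1 != 0) -> run_st Aut w (t + d) = sR.
Proof.
move=> H; elim: d => [|d IH] Hu; first by rewrite addn0.
rewrite addnS run_stS IH; last by move=> u Hu'; apply: Hu; lia.
by rewrite /= ifF //; apply/negbTE/Hu; lia.
Qed.

Lemma dl_R (x : SI * SO) : nat_of_ord x.1.1 = 0 -> dl sR x = sN x.2.1 x.2.2 (bit x.2.2 (dec x.1.1)).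
Proof. by move=> H; rewrite /= H. Qed.
Lemma dl_N_ok (x : SI * SO) b (i : 'I_N) e : bit i x.1.1 = e -> nat_of_ord x.1.1 != 0 ->
  dl (sN b i e) x = sN b x.2.2 (bit x.2.2 (dec x.1.1)).
Proof. by move=> H1 H2; rewrite /= H1 eqxx /= ifF //; apply/negbTE. Qed.
Lemma dl_N_zero (x : SI * SO) b (i : 'I_N) e : bit i x.1.1 = e -> nat_of_ord x.1.1 = 0 -> x.1.2 != b ->
  dl (sN b i e) x = sP ord0.
Proof. by move=> H1 H2 H3; rewrite /= H1 eqxx /= H2 eqxx /= ifT. Qed.

Section Lower.
Variable k : nat.
Hypothesis hk : k < K.
Variable tau : stratO SI SO.

Definition nextl (s : seq SI) : SI :=
  let t := size s in (Ordinal (cnt_lt (t %% K)),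
    if (K <= t) && (t %% K == 0) then ~~ (tau (take (t - K + k.+1) s)).1 else false).
Fixpoint gen t : seq SI := if t is t'.+1 then rcons (gen t') (nextl (gen t')) else [::].
Definition xl t := nextl (gen t).
Definition usl j := if j is j'.+1 then [:: xl (k.+1 + j')] else gen k.+1.
Definition wl t := (xl t, tau (gen (k.+1 + t))).

Lemma size_gen t : size (gen t) = t.
Proof. by elim: t => //= t IH; rewrite size_rcons IH. Qed.

Lemma nth_gen t j : j < t -> nth x0 (gen t) j = xl j.
Proof.
elim: t => // t IH Hj /=; rewrite nth_rcons size_gen.
have [Hlt|Hge] := ltnP j t; first exact: IH.
have -> : j = t by lia.
by rewrite eqxx.
Qed.

Lemma take_gen j t : j <= t -> take j (gen t) = gen j.
Proof.
elim: t => [|t IH] Hj; first by case: j Hj.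
case: (ltngtP j t.+1) Hj => // [Hlt _|-> _]; last by rewrite take_oversize // size_gen.
by rewrite /= -cats1 takel_cat ?size_gen // IH.
Qed.

Lemma bp_usl i : blocks_prefix usl i.+1 = gen (k.+1 + i).
Proof.
elim: i => [|i IH]; first by rewrite bpS /blocks_prefix /= addn0.
by rewrite bpS IH addnS cats1.
Qed.

Lemma wl_consistent : consistent_outcome (fk k) tau wl.
Proof.
exists usl; split.
  by case=> [|j] //; rewrite /fk /= size_rcons size_gen.
move=> j; rewrite bp_usl; split => //.
rewrite onthE (nth_map x0) ?size_gen; last by lia.
by rewrite nth_gen //; lia.
Qed.

Lemma c_wl t : nat_of_ord (wl t).1.1 = cnt (t %% K).
Proof. by rewrite /wl /xl /nextl /= size_gen. Qed.

Lemma c_wlS t : nat_of_ord (wl t.+1).1.1 = dec (wl t).1.1.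
Proof.
rewrite !c_wl dec_cnt ?ltn_pmod ?K_gt0 // modS.
by case: ifP.
Qed.

Lemma r_wl s : s %% K = 0 -> (wl (s + K)).1.2 = ~~ (wl s).2.1.
Proof.
move=> Hs; rewrite /wl /xl /nextl /= size_gen.
rewrite modD // modnn eqxx leq_addl /= take_gen; last by lia.
by have -> : s + K - K + k.+1 = k.+1 + s by lia.
Qed.

Lemma inner s u : s %% K = 0 -> run_st Aut wl s = sR -> u < K ->
  run_st Aut wl (s + u).+1 = sN (wl s).2.1 (wl (s + u)).2.2 (bit (wl (s + u)).2.2 (dec (wl (s + u)).1.1)).
Proof.
move=> Hs HR; elim: u => [|u IH] Hu.
  by rewrite addn0 run_stS HR dl_R // c_wl Hs.
rewrite !addnS run_stS IH; last by lia.
rewrite dl_N_ok //; first by rewrite c_wlS.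
by rewrite c_wl -addnS modD // modn_small // cnt_eq0.
Qed.

Lemma phase s : s %% K = 0 -> run_st Aut wl s = sR ->
  run_st Aut wl (s + K).+1 = sP ord0 /\ run_st Aut wl (s + K + K) = sR.
Proof.
move=> Hs HR; have HK := K_gt1.
have E : run_st Aut wl (s + K).+1 = sP ord0.
  have -> : s + K = (s + K.-1).+1 by lia.
  rewrite run_stS inner //; last by lia.
  rewrite dl_N_zero //; first by rewrite c_wlS.
    have -> : (s + K.-1).+1 = s + K by lia.
    by rewrite c_wl modD // modnn.
  have -> : (s + K.-1).+1 = s + K by lia.
  by rewrite r_wl //; case: (wl s).2.1.
split => //.
have E2 := chain_end E; rewrite subn0 in E2.
have -> : s + K + K = (s + K).+1 + N + (K - N.+1).
  have := N_ltK; lia.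
apply: Rstay => // u Hu.
rewrite c_wl -(subnK (_ : s <= u)); last by lia.
rewrite addnC modD // -(subnK (_ : K <= u - s)); last by lia.
rewrite modnDr modn_small; last by have := N_ltK; lia.
rewrite cnt_eq0; last by have := N_ltK; lia.
by have := N_ltK; lia.
Qed.

Lemma phases M : run_st Aut wl (M * (K + K)) = sR /\ run_st Aut wl (M * (K + K) + K).+1 = sP ord0.
Proof.
have Hs : forall M, (M * (K + K)) %% K = 0.
  move=> M'; have -> : M' * (K + K) = M'.*2 * K by nia.
  by rewrite modnMl.
elim: M => [|M [IH1 IH2]].
  by have [E1 E2] := phase (Hs 0) (erefl _).
have HR : run_st Aut wl (M.+1 * (K + K)) = sR.
  by rewrite mulSn addnC addnA; exact: (proj2 (phase (Hs M) IH1)).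
by split => //; exact: (proj1 (phase (Hs M.+1) HR)).
Qed.

End Lower.
End Constr.

Theorem theorem6 :
  exists C : nat, forall n : nat, 0 < n ->
    exists (SI SO : finType) (A : PAC (SI * SO)%type),
      finitary_buchi A /\
      #|st A| <= C * n /\
      (forall f, delay_fun f -> O_wins A f) /\
      optimal_cost A (fk (2 ^ n)) 0 /\
      (forall k, k < 2 ^ n -> optimal_cost A (fk k) n).
Proof.
exists 7 => -[//|m] _.
exists (SI m), (SO m), (Aut m).
have costN : forall f tau, strat_cost_le (Aut m) f tau m.+1.
  by move=> f tau w _; exists 0 => t _; apply: Cor_all.
have win : forall f tau, winning (Aut m) f tau.
  by move=> f tau w Hw; exists m.+1; apply: costN Hw.
have tau0 : stratO (SI m) (SO m) := fun _ => (false, ord0).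
split.
  split; first by [].
  split; first by case=> [[[]|j]|x]; [right|right|left|right].
  by split; [exists (sP (@ord0 m)) | exists (sR m)].
split.
  rewrite /Aut /= !card_sum !card_prod !card_ord card_bool; lia.
split; first by move=> f _; exists tau0; apply: win.
split.
  split => //; exists (@tau_up m); split; first exact: win.
  move=> w [us [Hm Ho]]; exists 0 => t _; left.
  case: t => [|t]; first by [].
  have := up_inv Hm Ho t.
  by case: (run_st (Aut m) w t.+1) => [[g|j]|x].
move=> k hk; split.
  by exists tau0; split; [apply: win | apply: costN].
move=> tau _ c' Hc.
have [N0 HN] := Hc _ (wl_consistent hk tau).
have Ht := proj2 (phases hk tau N0).
set t := (N0 * (K m + K m) + K m).+1 in Ht.
have := HN t; case.
  by rewrite /t; have := K_gt0 m; nia.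
  by rewrite Ht.
move=> [n' [Hlt [[_ [_ Hev]] Hseg]]].
rewrite seg_costE in Hseg.
have [Hsmall|//] := ltnP (n' - t) m.+1; last by lia.
have := chain Ht (_ : 0 + (n' - t) < m.+1) => /(_ Hsmall).
have -> : t + (n' - t) = n' by lia.
by move=> E; rewrite E in Hev.
Qed.
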